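(* Let $q$ be an odd prime power, let $\mathcal C$ be an irreducible conic of $\mathrm{PG}(2,q^2)$, let $\mathcal B$ be a Baer subplane of $\mathrm{PG}(2,q^2)$, and let $\mathcal E$ be the set of points of $\mathrm{PG}(2,q^2)$ external to $\mathcal C$. Then $|\mathcal E\cap\mathcal B|\geq\frac{q^2-3}{2}$.
   Context: A Baer subplane of $\mathrm{PG}(2,q^2)$ is a subplane of order $q$ (e.g. the canonically embedded $\mathrm{PG}(2,q)$). A point not on $\mathcal C$ is external to $\mathcal C$ if it lies on two tangent lines to $\mathcal C$. *)

(* Defs.v *)
From HB Require Import structures.
From mathcomp Require Import all_boot all_order all_algebra all_field.
Set Implicit Arguments. Unset Strict Implicit. Unset Printing Implicit Defensive.
Import GRing.Theory.
Local Open Scope ring_scope.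

(* The projective plane PG(2,F) over a finite field F.
   A point (and, dually, a line) is a 1-dimensional subspace of F^3,
   represented as a set of row vectors. *)
Section PG2.
Variable F : finFieldType.

Definition pspan (v : 'rV[F]_3) : {set 'rV[F]_3} := [set c *: v | c : F].

Definition pg_points : {set {set 'rV[F]_3}} :=
  [set pspan v | v : 'rV[F]_3 & v != 0].

Definition incident (P L : {set 'rV[F]_3}) : bool :=
  [forall u in P, forall w in L, (u *m w^T) == 0].

Definition collinear (P Q R : {set 'rV[F]_3}) : Prop :=
  exists2 L, L \in pg_points & [&& incident P L, incident Q L & incident R L].

Definition conic (A : 'M[F]_3) : {set {set 'rV[F]_3}} :=
  [set P in pg_points | [forall u in P, (u *m A *m u^T) == 0]].

(* irreducible conic in odd characteristic: nonsingular symmetric matrix *)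
Definition irreducible_conic_matrix (A : 'M[F]_3) : bool :=
  (A^T == A) && (\det A != 0).

Definition tangent (A : 'M[F]_3) (L : {set 'rV[F]_3}) : bool :=
  (L \in pg_points) && (#|[set P in conic A | incident P L]| == 1)%N.

Definition external_points (A : 'M[F]_3) : {set {set 'rV[F]_3}} :=
  [set P in pg_points | (P \notin conic A) &&
     (#|[set L in pg_points | tangent A L && incident P L]| == 2)%N].

Definition subplane_of_order (n : nat) (B : {set {set 'rV[F]_3}}) : Prop :=
  B \subset pg_points /\
  exists Ls : {set {set 'rV[F]_3}},
    [/\ Ls \subset pg_points,
        (forall L, L \in Ls -> #|[set P in B | incident P L]| = n.+1),
        (forall P Q, P \in B -> Q \in B -> P != Q ->
            exists2 L, L \in Ls & incident P L && incident Q L),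
        (forall L M, L \in Ls -> M \in Ls -> L != M ->
            exists2 P, P \in B & incident P L && incident P M) &
        (exists P1 P2 P3 P4,
            [/\ P1 \in B, P2 \in B, P3 \in B & P4 \in B] /\
            [/\ ~ collinear P1 P2 P3, ~ collinear P1 P2 P4,
                ~ collinear P1 P3 P4 & ~ collinear P2 P3 P4])].

Definition baer_subplane (q : nat) (B : {set {set 'rV[F]_3}}) : Prop :=
  subplane_of_order q B.

End PG2.

Definition prime_power (q : nat) : Prop :=
  exists p k, [/\ prime p, (0 < k)%N & q = (p ^ k)%N].

(* Main.v *)
Require Import Defs.
From mathcomp Require Import all_boot all_order all_algebra all_field.
From mathcomp Require Import all_fingroup all_solvable.
From mathcomp Require Import ring zify.
Set Implicit Arguments. Unset Strict Implicit. Unset Printing Implicit Defensive.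
Import GRing.Theory.
Local Open Scope ring_scope.

Lemma two_neq0 (F : finFieldType) : odd #|F| -> (2%:R : F) != 0.
move=> hodd; apply/negP => /eqP h2.
have pc : 2%N \in [pchar F] by rewrite inE /= h2 eqxx.
have hc := card_pprimeChar pc.
have e : #|F| = #|pPrimeCharType pc| by [].
have g1 := finNzRing_gt1 F.
move: hodd g1; rewrite e hc.
by case: (logn _ _) => [|n] //; rewrite expnS oddM.
Qed.



Section Vec.
Variable F : finFieldType.
Local Notation V := 'rV[F]_3.

Definition i0 : 'I_3 := @Ordinal 3 0 isT.
Definition i1 : 'I_3 := @Ordinal 3 1 isT.
Definition i2 : 'I_3 := @Ordinal 3 2 isT.

Local Notation c0 u := (u ord0 i0).
Local Notation c1 u := (u ord0 i1).
Local Notation c2 u := (u ord0 i2).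

Lemma ord3_cases (i : 'I_3) : [\/ i = i0, i = i1 | i = i2].
Proof.
case: i => [[|[|[|m]]] hi] //.
- by constructor 1; apply: val_inj.
- by constructor 2; apply: val_inj.
- by constructor 3; apply: val_inj.
Qed.

Lemma vec_eq (u v : V) : (c0 u) = (c0 v) -> (c1 u) = (c1 v) -> (c2 u) = (c2 v) -> u = v.
Proof.
move=> h0 h1 h2; apply/rowP => i.
by case: (ord3_cases i) => ->.
Qed.

Lemma sum3 (G : 'I_3 -> F) : \sum_(i < 3) G i = G i0 + G i1 + G i2.
Proof.
rewrite !big_ord_recl big_ord0 addr0 addrA.
by congr (G _ + G _ + G _); apply: val_inj.
Qed.

Definition mk3 (a b c : F) : V :=
  \row_(j < 3) (if val j == 0%N then a else if val j == 1%N then b else c).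

Lemma mk3_0 a b c : (c0 (mk3 a b c)) = a. Proof. by rewrite mxE. Qed.
Lemma mk3_1 a b c : (c1 (mk3 a b c)) = b. Proof. by rewrite mxE. Qed.
Lemma mk3_2 a b c : (c2 (mk3 a b c)) = c. Proof. by rewrite mxE. Qed.

Definition dot (u v : V) : F := (c0 u) * (c0 v) + (c1 u) * (c1 v) + (c2 u) * (c2 v).
Definition cross (u v : V) : V :=
  mk3 ((c1 u) * (c2 v) - (c2 u) * (c1 v)) ((c2 u) * (c0 v) - (c0 u) * (c2 v)) ((c0 u) * (c1 v) - (c1 u) * (c0 v)).

Lemma compE (a b : F) (u v : V) (i : 'I_3) :
  (a *: u + b *: v) ord0 i = a * u ord0 i + b * v ord0 i.
Proof. by rewrite !mxE. Qed.

Ltac vring := apply: vec_eq; rewrite /dot /cross ?mk3_0 ?mk3_1 ?mk3_2 !mxE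
   ?mk3_0 ?mk3_1 ?mk3_2; ring.

Lemma dotC u v : dot u v = dot v u.
Proof. rewrite /dot; ring. Qed.

Lemma dotDl a b u v w : dot (a *: u + b *: v) w = a * dot u w + b * dot v w.
Proof. rewrite /dot !mxE; ring. Qed.

Lemma dotDr a b u v w : dot w (a *: u + b *: v) = a * dot w u + b * dot w v.
Proof. rewrite /dot !mxE; ring. Qed.

Lemma dotZl a u w : dot (a *: u) w = a * dot u w.
Proof. rewrite /dot !mxE; ring. Qed.

Lemma dotZr a u w : dot w (a *: u) = a * dot w u.
Proof. rewrite /dot !mxE; ring. Qed.

Lemma cross_cross w u v : cross w (cross u v) = dot w v *: u - dot w u *: v.
Proof.
apply: vec_eq; rewrite /dot /cross !mxE /=; ring.
Qed.


Lemma zero_comp (i : 'I_3) : (0 : V) ord0 i = 0.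
Proof. by rewrite mxE. Qed.

Lemma nz3 (v : V) : v != 0 -> [\/ c0 v != 0, c1 v != 0 | c2 v != 0].
Proof.
move=> hv.
case: (eqVneq (c0 v) 0) => h0; last by constructor 1.
case: (eqVneq (c1 v) 0) => h1; last by constructor 2.
case: (eqVneq (c2 v) 0) => h2; last by constructor 3.
by move: hv; rewrite (_ : v = 0) ?eqxx //; apply: vec_eq; rewrite zero_comp.
Qed.

Lemma nonperp (v : V) : v != 0 -> exists e : V, dot e v != 0.
Proof.
case/nz3 => h.
- by exists (mk3 1 0 0); rewrite /dot mk3_0 mk3_1 mk3_2 mul1r !mul0r !addr0.
- by exists (mk3 0 1 0); rewrite /dot mk3_0 mk3_1 mk3_2 mul1r !mul0r add0r addr0.
- by exists (mk3 0 0 1); rewrite /dot mk3_0 mk3_1 mk3_2 mul1r !mul0r !add0r.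
Qed.

Lemma crossC u v : cross u v = - cross v u.
Proof. apply: vec_eq; rewrite /cross !mxE /=; ring. Qed.

Lemma cross_self u : cross u u = 0.
Proof. apply: vec_eq; rewrite /cross !mxE /=; ring. Qed.

Lemma crossDl a b u v w : cross (a *: u + b *: v) w = a *: cross u w + b *: cross v w.
Proof. apply: vec_eq; rewrite /cross !mxE /=; ring. Qed.

Lemma crossDr a b u v w : cross w (a *: u + b *: v) = a *: cross w u + b *: cross w v.
Proof. apply: vec_eq; rewrite /cross !mxE /=; ring. Qed.

Lemma crossZl a u w : cross (a *: u) w = a *: cross u w.
Proof. apply: vec_eq; rewrite /cross !mxE /=; ring. Qed.

Lemma crossZr a u w : cross w (a *: u) = a *: cross w u.
Proof. apply: vec_eq; rewrite /cross !mxE /=; ring. Qed.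

Lemma cross0l u : cross 0 u = 0.
Proof. apply: vec_eq; rewrite /cross !mxE /=; ring. Qed.

Lemma dot_cross_l u v : dot u (cross u v) = 0.
Proof. rewrite /dot /cross !mxE /=; ring. Qed.

Lemma dot_cross_r u v : dot v (cross u v) = 0.
Proof. rewrite /dot /cross !mxE /=; ring. Qed.

Lemma triple_cyc x u v : dot x (cross u v) = dot u (cross v x).
Proof. rewrite /dot /cross !mxE /=; ring. Qed.

Lemma triple_swap x u v : dot x (cross u v) = - dot x (cross v u).
Proof. rewrite /dot /cross !mxE /=; ring. Qed.

Lemma dot0l u : dot 0 u = 0.
Proof. rewrite /dot !zero_comp; ring. Qed.

Lemma cross_eq0 u v : v != 0 -> cross u v = 0 -> exists c, u = c *: v.
Proof.
move=> hv h.
have [e he] := nonperp hv.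
have := cross_cross e u v; rewrite h.
rewrite (_ : cross e 0 = 0); last by apply: vec_eq; rewrite /cross !mxE /=; ring.
move/eqP; rewrite eq_sym subr_eq0 => /eqP h2.
exists ((dot e v)^-1 * dot e u).
by rewrite -scalerA -h2 scalerA mulVf // scale1r.
Qed.

Lemma perp2 u v w : cross u v != 0 -> dot w u = 0 -> dot w v = 0 ->
  exists c, w = c *: cross u v.
Proof.
move=> hn h1 h2; apply: cross_eq0 => //.
by rewrite cross_cross h1 h2 !scale0r subr0.
Qed.

Lemma cramer p1 p2 p3 x :
  dot p1 (cross p2 p3) *: x = dot x (cross p2 p3) *: p1 + dot p1 (cross x p3) *: p2
     + dot p1 (cross p2 x) *: p3.
Proof. apply: vec_eq; rewrite /dot /cross !mxE /=; ring. Qed.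

Lemma span2 u v x : cross u v != 0 -> dot x (cross u v) = 0 ->
  exists a b, x = a *: u + b *: v.
Proof.
move=> hn hx.
have [e he] := nonperp hn.
have hD : dot u (cross v e) != 0 by rewrite -triple_cyc.
have := cramer u v e x.
rewrite (_ : dot u (cross v x) = 0); last by rewrite -triple_cyc.
rewrite scale0r addr0 => h.
exists ((dot u (cross v e))^-1 * dot x (cross v e)).
exists ((dot u (cross v e))^-1 * dot u (cross x e)).
by rewrite -!scalerA -scalerDr -h scalerA mulVf // scale1r.
Qed.

Lemma indep u v a b : cross u v != 0 -> a *: u + b *: v = 0 -> a = 0 /\ b = 0.
Proof.
move=> hn h; split.
- have := congr1 (fun z => cross z v) h.
  rewrite crossDl cross_self scaler0 addr0 cross0l => /eqP.
  by rewrite scaler_eq0 (negbTE hn) orbF => /eqP.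
- have := congr1 (fun z => cross u z) h.
  rewrite crossDr cross_self scaler0 add0r.
  rewrite (_ : cross u 0 = 0); last by apply: vec_eq; rewrite /cross !mxE /=; ring.
  by move/eqP; rewrite scaler_eq0 (negbTE hn) orbF => /eqP.
Qed.

End Vec.

Ltac vr := apply: vec_eq; rewrite /cross /dot !mxE /=; ring.

Section Geo.
Variable F : finFieldType.
Local Notation V := 'rV[F]_3.
Local Notation pts := (pg_points F).

Lemma pspanP (u v : V) : reflect (exists c, u = c *: v) (u \in pspan v).
Proof.
apply: (iffP imsetP) => [[c _ ->]|[c ->]]; first by exists c.
by exists c.
Qed.

Lemma pspan_self (v : V) : v \in pspan v.
Proof. by apply/pspanP; exists 1; rewrite scale1r. Qed.

Lemma pspanZ (c : F) (v : V) : c != 0 -> pspan (c *: v) = pspan v.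
Proof.
move=> hc; apply/setP => x; apply/pspanP/pspanP => [[d ->]|[d ->]].
- by exists (d * c); rewrite scalerA.
- by exists (d / c); rewrite scalerA mulfVK.
Qed.

Lemma pspan_inj (u v : V) : u != 0 -> pspan u = pspan v ->
  exists c, c != 0 /\ u = c *: v.
Proof.
move=> hu e; have := pspan_self u; rewrite e => /pspanP[c hc].
exists c; split => //; apply: contraNneq hu => c0.
by rewrite hc c0 scale0r.
Qed.

Lemma pspan_cross (u v : V) : u != 0 -> v != 0 -> pspan u != pspan v ->
  cross u v != 0.
Proof.
move=> hu hv; apply: contraNneq => h.
have [c hc] := cross_eq0 hv h.
have c0 : c != 0 by apply/eqP => c0; move: hu; rewrite hc c0 scale0r eqxx.
by rewrite hc pspanZ.
Qed.

Lemma cross_pspan (u v : V) : cross u v != 0 -> pspan u != pspan v.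
Proof.
move=> hn; apply/negP => /eqP e.
have hu : u != 0 by apply: contraNneq hn => ->; rewrite cross0l.
have [c [_ hc]] := pspan_inj hu e.
by move: hn; rewrite hc crossZl cross_self scaler0 eqxx.
Qed.

Lemma pg_pspan (v : V) : v != 0 -> pspan v \in pts.
Proof. by move=> hv; apply/imsetP; exists v; rewrite ?inE. Qed.

Definition vec (P : {set V}) : V := odflt 0 [pick x in P | x != 0].

Lemma vecP P : P \in pts -> vec P != 0 /\ P = pspan (vec P).
Proof.
case/imsetP => v; rewrite inE => hv ->.
rewrite /vec; case: pickP => [x /andP[hx hx0]|h] /=.
- split => //; case/pspanP: hx => c hc.
  have c0 : c != 0 by apply: contraNneq hx0 => c0; rewrite hc c0 scale0r.
  by rewrite hc pspanZ.
- by have := h v; rewrite pspan_self hv.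
Qed.

Lemma vec_nz P : P \in pts -> vec P != 0.
Proof. by case/vecP. Qed.

Lemma vec_eq_span P : P \in pts -> P = pspan (vec P).
Proof. by case/vecP. Qed.

Lemma mx11 (M : 'M[F]_1) : (M == 0) = (M ord0 ord0 == 0).
Proof.
apply/eqP/eqP => [->|h]; first by rewrite mxE.
by apply/matrixP => i j; rewrite !ord1 h mxE.
Qed.

Lemma mulmxT_dot (u w : V) : (u *m w^T) ord0 ord0 = dot u w.
Proof. by rewrite mxE sum3 !mxE. Qed.

Lemma incE (u w : V) : incident (pspan u) (pspan w) = (dot u w == 0).
Proof.
apply/idP/idP.
- move/forall_inP/(_ u (pspan_self u))/forall_inP/(_ w (pspan_self w)).
  by rewrite mx11 mulmxT_dot.
- move=> /eqP h; apply/forall_inP => x /pspanP[c ->].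
  apply/forall_inP => y /pspanP[d ->].
  by rewrite mx11 mulmxT_dot dotZl dotZr h !mulr0.
Qed.

Lemma incV P L : P \in pts -> L \in pts -> incident P L = (dot (vec P) (vec L) == 0).
Proof.
move=> hP hL; rewrite {1}(vec_eq_span hP) {1}(vec_eq_span hL); exact: incE.
Qed.

Lemma incC P L : P \in pts -> L \in pts -> incident P L = incident L P.
Proof. by move=> hP hL; rewrite !incV // dotC. Qed.

Lemma line_uniq P Q L M : P \in pts -> Q \in pts -> L \in pts -> M \in pts ->
  P != Q -> incident P L -> incident Q L -> incident P M -> incident Q M -> L = M.
Proof.
move=> hP hQ hL hM hPQ.
rewrite !incV // => /eqP h1 /eqP h2 /eqP h3 /eqP h4.
have hn : cross (vec P) (vec Q) != 0.
  apply: pspan_cross; rewrite ?vec_nz //.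
  by rewrite -(vec_eq_span hP) -(vec_eq_span hQ).
have [c hc] := perp2 hn (etrans (dotC _ _) h1) (etrans (dotC _ _) h2).
have [d hd] := perp2 hn (etrans (dotC _ _) h3) (etrans (dotC _ _) h4).
have c0 : c != 0 by apply: contraNneq (vec_nz hL) => c0; rewrite hc c0 scale0r.
have d0 : d != 0 by apply: contraNneq (vec_nz hM) => d0; rewrite hd d0 scale0r.
by rewrite (vec_eq_span hL) (vec_eq_span hM) hc hd !pspanZ.
Qed.

Lemma pt_uniq P Q L M : P \in pts -> Q \in pts -> L \in pts -> M \in pts ->
  L != M -> incident P L -> incident P M -> incident Q L -> incident Q M -> P = Q.
Proof.
move=> hP hQ hL hM hLM h1 h2 h3 h4.
apply/eqP; apply: contraNT hLM => hPQ; apply/eqP.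
by apply: (line_uniq hP hQ) => //.
Qed.

Definition jn (X Y : {set V}) : {set V} := pspan (cross (vec X) (vec Y)).

Lemma jn_cross X Y : X \in pts -> Y \in pts -> X != Y -> cross (vec X) (vec Y) != 0.
Proof.
move=> hX hY hXY; apply: pspan_cross; rewrite ?vec_nz //.
by rewrite -(vec_eq_span hX) -(vec_eq_span hY).
Qed.

Lemma jnP X Y : X \in pts -> Y \in pts -> X != Y ->
  [/\ jn X Y \in pts, incident X (jn X Y) & incident Y (jn X Y)].
Proof.
move=> hX hY hXY; have hn := jn_cross hX hY hXY.
split; first exact: pg_pspan.
- by rewrite {1}(vec_eq_span hX) incE dot_cross_l.
- by rewrite {1}(vec_eq_span hY) incE dot_cross_r.
Qed.

Lemma jnP' X Y : X \in pts -> Y \in pts -> X != Y ->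
  [/\ jn X Y \in pts, incident (jn X Y) X & incident (jn X Y) Y].
Proof.
move=> hX hY hXY; have [h1 h2 h3] := jnP hX hY hXY.
by split => //; rewrite incC.
Qed.



Lemma perp_basis (w : V) : w != 0 -> exists u v : V, exists k : F,
  k != 0 /\ cross u v = k *: w.
Proof.
case/nz3 => h.
- exists (mk3 (- w ord0 i1) (w ord0 i0) 0), (mk3 (- w ord0 i2) 0 (w ord0 i0)), (w ord0 i0).
  by split => //; vr.
- exists (mk3 (w ord0 i1) (- w ord0 i0) 0), (mk3 0 (- w ord0 i2) (w ord0 i1)), (- w ord0 i1).
  by rewrite oppr_eq0; split => //; vr.
- exists (mk3 (w ord0 i2) 0 (- w ord0 i0)), (mk3 0 (w ord0 i2) (- w ord0 i1)), (w ord0 i2).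
  by split => //; vr.
Qed.

Lemma nz_comb (u v : V) a b : cross u v != 0 -> a != 0 -> a *: u + b *: v != 0.
Proof. by move=> hn ha; apply/eqP => /(indep hn) [h _]; rewrite h eqxx in ha. Qed.

Lemma nz_comb' (u v : V) a b : cross u v != 0 -> b != 0 -> a *: u + b *: v != 0.
Proof. by move=> hn hb; apply/eqP => /(indep hn) [_ h]; rewrite h eqxx in hb. Qed.

Lemma line_pts L : L \in pts -> exists u v : V, cross u v != 0 /\
  [set P in pts | incident P L] = pspan v |: ((fun t => pspan (u + t *: v)) @: [set: F]).
Proof.
move=> hL; have hw := vec_nz hL.
have [u [v [k [hk huv]]]] := perp_basis hw.
have hn : cross u v != 0 by rewrite huv scaler_eq0 negb_or hk.
have incL x : incident (pspan x) L = (dot x (cross u v) == 0).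
  by rewrite {1}(vec_eq_span hL) incE huv dotZr mulf_eq0 (negbTE hk).
exists u, v; split => //.
apply/setP => P; rewrite !inE; apply/andP/idP.
- case=> hP; rewrite (vec_eq_span hP) incL => /eqP hx.
  have [a [b hab]] := span2 hn hx.
  case: (eqVneq a 0) => ha.
  + have hb : b != 0 by apply: contraNneq (vec_nz hP) => hb; rewrite hab ha hb !scale0r addr0.
    by rewrite hab ha scale0r add0r pspanZ // eqxx.
  + apply/orP; right; apply/imsetP; exists (b / a); rewrite ?inE //.
    rewrite hab -(pspanZ (u + b / a *: v) ha); congr pspan.
    by rewrite scalerDr scalerA [a * _]mulrC divfK.
- case/orP => [/eqP ->|/imsetP[t _ ->]].
  + split; first by apply: pg_pspan; apply: contraNneq hn => ->; rewrite crossC cross0l oppr0.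
    by rewrite incL dot_cross_r.
  + have hx : u + t *: v != 0 by rewrite -[u]scale1r nz_comb // oner_neq0.
    split; first exact: pg_pspan.
    rewrite incL; have -> : u + t *: v = 1 *: u + t *: v by rewrite scale1r.
    by rewrite dotDl dot_cross_l dot_cross_r !mulr0 addr0.
Qed.

Lemma line_card L : L \in pts -> #|[set P in pts | incident P L]| = (#|F|).+1.
Proof.
move=> hL; have [u [v [hn ->]]] := line_pts hL.
rewrite cardsU1 card_imset ?cardsT.
- suff -> : pspan v \notin [set pspan (u + t *: v) | t in [set: F]] by rewrite add1n.
  apply/negP => /imsetP [t _ e].
  have hv : v != 0 by apply: contraNneq hn => ->; rewrite crossC cross0l oppr0.
  have [c [hc e2]] := pspan_inj hv e.
  have : c *: u + (c * t - 1) *: v = 0.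
    have -> : c *: u + (c * t - 1) *: v = c *: (u + t *: v) - v by vr.
    by rewrite -e2 subrr.
  by case/(indep hn) => c0 _; rewrite c0 eqxx in hc.
- move=> t s e.
  have hx : u + t *: v != 0 by rewrite -[u]scale1r nz_comb // oner_neq0.
  have [c [hc e2]] := pspan_inj hx e.
  have : (1 - c) *: u + (t - c * s) *: v = 0.
    have -> : (1 - c) *: u + (t - c * s) *: v = (u + t *: v) - c *: (u + s *: v) by vr.
    by rewrite -e2 subrr.
  case/(indep hn) => h1 h2.
  have c1 : c = 1 by apply/eqP; rewrite eq_sym -subr_eq0 h1.
  by apply/eqP; rewrite -subr_eq0 -h2 c1 mul1r.
Qed.

End Geo.

Section Baer.
Variable F : finFieldType.
Local Notation V := 'rV[F]_3.
Local Notation pts := (pg_points F).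
Variables (q : nat) (B Ls : {set {set V}}).
Hypothesis hF : #|F| = (q ^ 2)%N.
Hypothesis hB : B \subset pts.
Hypothesis hLs : Ls \subset pts.
Hypothesis hcard : forall L, L \in Ls -> #|[set P in B | incident P L]| = q.+1.
Hypothesis hjoin : forall P Q, P \in B -> Q \in B -> P != Q ->
            exists2 L, L \in Ls & incident P L && incident Q L.
Hypothesis hmeet : forall L M, L \in Ls -> M \in Ls -> L != M ->
            exists2 P, P \in B & incident P L && incident P M.
Variables P1 P2 P3 : {set V}.
Hypothesis hP1 : P1 \in B.
Hypothesis hP2 : P2 \in B.
Hypothesis hP3 : P3 \in B.
Hypothesis hncol : ~ collinear P1 P2 P3.

Lemma inB_pts P : P \in B -> P \in pts.
Proof. by move=> h; apply: (subsetP hB). Qed.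
Lemma inLs_pts L : L \in Ls -> L \in pts.
Proof. by move=> h; apply: (subsetP hLs). Qed.

Lemma BF_join P Q L : P \in B -> Q \in B -> P != Q -> L \in pts ->
  incident P L -> incident Q L -> L \in Ls.
Proof.
move=> hP hQ hPQ hL h1 h2.
have [M hM /andP[h3 h4]] := hjoin hP hQ hPQ.
rewrite (line_uniq (inB_pts hP) (inB_pts hQ) hL (inLs_pts hM) hPQ h1 h2 h3 h4) //.
Qed.

Lemma BF_meet L M X : L \in Ls -> M \in Ls -> L != M -> X \in pts ->
  incident X L -> incident X M -> X \in B.
Proof.
move=> hL hM hLM hX h1 h2.
have [P hP /andP[h3 h4]] := hmeet hL hM hLM.
by rewrite (pt_uniq hX (inB_pts hP) (inLs_pts hL) (inLs_pts hM) hLM h1 h2 h3 h4).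
Qed.

Lemma line_through1 (P : {set V}) : P \in pts -> exists2 L, L \in pts & incident P L.
Proof.
move=> hP; have [u [v [k [hk huv]]]] := perp_basis (vec_nz hP).
have hn : cross u v != 0 by rewrite huv scaler_eq0 negb_or hk vec_nz.
have hu : u != 0 by apply: contraNneq hn => ->; rewrite cross0l.
exists (pspan u); first exact: pg_pspan.
rewrite {1}(vec_eq_span hP) incE.
have := dot_cross_l u v; rewrite huv dotZr dotC => /eqP.
by rewrite mulf_eq0 (negbTE hk).
Qed.

Lemma ncol_neq : [/\ P1 != P2, P1 != P3 & P2 != P3].
Proof.
have h1 := inB_pts hP1; have h2 := inB_pts hP2; have h3 := inB_pts hP3.
split; apply/eqP => e; apply: hncol.
- rewrite e; case: (eqVneq P2 P3) => [<-|ne].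
  + have [L hL hi] := line_through1 h2; by exists L; rewrite ?hi.
  + have [hl i1 i2] := jnP h2 h3 ne; by exists (jn P2 P3); rewrite ?i1 ?i2.
- rewrite e; case: (eqVneq P3 P2) => [<-|ne].
  + have [L hL hi] := line_through1 h3; by exists L; rewrite ?hi.
  + have [hl i1 i2] := jnP h3 h2 ne; by exists (jn P3 P2); rewrite ?i1 ?i2.
- rewrite e; case: (eqVneq P1 P3) => [<-|ne].
  + have [L hL hi] := line_through1 h1; by exists L; rewrite ?hi.
  + have [hl i1 i2] := jnP h1 h3 ne; by exists (jn P1 P3); rewrite ?i1 ?i2.
Qed.

Lemma Ls_big : (q ^ 2 + 2 <= #|Ls|)%N.
Proof.
have [n12 n13 n23] := ncol_neq.
have [l0 hl0 /andP[a1 a2]] := hjoin hP1 hP2 n12.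
have [l1 hl1 /andP[b1 b3]] := hjoin hP1 hP3 n13.
have hl01 : l0 != l1.
  apply/eqP => e; apply: hncol; exists l0; first exact: inLs_pts.
  by rewrite a1 a2 e b3.
pose S0 := [set R in B | incident R l0] :\ P1.
pose S1 := [set R in B | incident R l1] :\ P1.
have cS0 : #|S0| = q.
  by have := cardsD1 P1 [set R in B | incident R l0]; rewrite hcard // inE hP1 a1 add1n => /eqP; rewrite eqSS => /eqP ->.
have cS1 : #|S1| = q.
  by have := cardsD1 P1 [set R in B | incident R l1]; rewrite hcard // inE hP1 b1 add1n => /eqP; rewrite eqSS => /eqP ->.
have hp0 := inLs_pts hl0; have hp1 := inLs_pts hl1.
have onlyP1 R : R \in B -> incident R l0 -> incident R l1 -> R = P1.
  move=> hR i0 i1.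
  exact: (pt_uniq (inB_pts hR) (inB_pts hP1) hp0 hp1 hl01 i0 i1 a1 b1).
have memS0 R : R \in S0 -> [/\ R \in B, incident R l0 & R != P1].
  by rewrite !inE => /and3P[-> -> ->].
have memS1 R : R \in S1 -> [/\ R \in B, incident R l1 & R != P1].
  by rewrite !inE => /and3P[-> -> ->].
pose phi := fun p : {set V} * {set V} => jn p.1 p.2.
have neqRS R S : R \in S0 -> S \in S1 -> R != S.
  move=> /memS0[hR iR nR] /memS1[hS iS nS]; apply/eqP => e.
  by move: nR; rewrite (onlyP1 R hR iR) ?eqxx // e.
have phiP R S : R \in S0 -> S \in S1 ->
   [/\ phi (R, S) \in Ls, incident R (phi (R, S)) & incident S (phi (R, S))].
  move=> hR hS; have ne := neqRS R S hR hS.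
  have [hR' _ _] := memS0 R hR; have [hS' _ _] := memS1 S hS.
  have [j1 j2 j3] := jnP (inB_pts hR') (inB_pts hS') ne.
  by split => //; apply: (BF_join hR' hS' ne).
have inj : {in setX S0 S1 &, injective phi}.
  move=> [R S] [R' S']; rewrite !in_setX /= => /andP[hR hS] /andP[hR' hS'] e.
  have [m1 m2 m3] := phiP R S hR hS; have [m1' m2' m3'] := phiP R' S' hR' hS'.
  rewrite -e in m1' m2' m3'.
  have [hRB iR nR] := memS0 R hR; have [hSB iS nS] := memS1 S hS.
  have [hRB' iR' nR'] := memS0 R' hR'; have [hSB' iS' nS'] := memS1 S' hS'.
  have hm := inLs_pts m1.
  congr pair.
  - apply/eqP; apply/negPn/negP => ne.
    have el := line_uniq (inB_pts hRB) (inB_pts hRB') hm hp0 ne m2 m2' iR iR'.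
    by move: nS; rewrite (onlyP1 S hSB) ?eqxx // -el.
  - apply/eqP; apply/negPn/negP => ne.
    have el := line_uniq (inB_pts hSB) (inB_pts hSB') hm hp1 ne m3 m3' iS iS'.
    by move: nR; rewrite (onlyP1 R hRB) ?eqxx // -el.
have nl0 : l0 \notin phi @: setX S0 S1.
  apply/imsetP => -[[R S]]; rewrite !in_setX /= => /andP[hR hS] e.
  have [m1 m2 m3] := phiP R S hR hS; rewrite -e in m3.
  have [hSB iS nS] := memS1 S hS.
  by move: nS; rewrite (onlyP1 S hSB) ?eqxx.
have nl1 : l1 \notin l0 |: phi @: setX S0 S1.
  rewrite !inE negb_or eq_sym hl01 /=.
  apply/imsetP => -[[R S]]; rewrite !in_setX /= => /andP[hR hS] e.
  have [m1 m2 m3] := phiP R S hR hS; rewrite -e in m2.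
  have [hRB iR nR] := memS0 R hR.
  by move: nR; rewrite (onlyP1 R hRB) ?eqxx.
have sub : l1 |: (l0 |: phi @: setX S0 S1) \subset Ls.
  apply/subsetP => L; rewrite !inE => /orP[/eqP ->//|/orP[/eqP ->//|]].
  by case/imsetP => -[R S]; rewrite !in_setX /= => /andP[hR hS] ->; case: (phiP R S hR hS).
have := subset_leq_card sub.
rewrite cardsU1 nl1 cardsU1 nl0 card_in_imset // cardsX cS0 cS1.
by rewrite add1n add1n addn2 mulnn.
Qed.

Lemma every_line L : L \in pts -> exists2 P, P \in B & incident P L.
Proof.
move=> hL; case: (boolP [exists P in B, incident P L]) => [/exists_inP //|/exists_inPn hno]; exfalso.
have hLs_neq M : M \in Ls -> M != L.
  move=> hM; apply/eqP => e.
  have : (0 < #|[set P in B | incident P M]|)%N by rewrite hcard.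
  case/card_gt0P => P; rewrite inE => /andP[hP iP].
  by move: (hno P hP); rewrite -e iP.
pose psi := fun M => jn M L.
have psiP M : M \in Ls -> psi M \in [set P in pts | incident P L] /\ incident (psi M) M.
  move=> hM; have [j1 j2 j3] := jnP' (inLs_pts hM) hL (hLs_neq M hM).
  by rewrite inE j1 j3.
have sub : psi @: Ls \subset [set P in pts | incident P L].
  by apply/subsetP => X /imsetP[M hM ->]; case: (psiP M hM).
have inj : {in Ls &, injective psi}.
  move=> M M' hM hM' e; apply/eqP/negPn/negP => ne.
  have [h1 h2] := psiP M hM; have [h1' h2'] := psiP M' hM'.
  rewrite inE in h1; case/andP: h1 => hX iX.
  rewrite -e in h2'.
  by move: (hno _ (BF_meet hM hM' ne hX h2 h2')); rewrite iX.
have := subset_leq_card sub; rewrite card_in_imset // line_card // hF.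
have := Ls_big; move=> h1 h2.
by have := leq_trans h1 h2; rewrite addn2 ltnn.
Qed.

End Baer.

Section Conic.
Variable F : finFieldType.
Local Notation V := 'rV[F]_3.
Local Notation pts := (pg_points F).
Variable A : 'M[F]_3.
Hypothesis hAT : A^T = A.
Hypothesis hdet : \det A != 0.
Hypothesis h2 : (2%:R : F) != 0.

Definition pv (x : V) : V := x *m A.
Definition bil (x y : V) : F := dot (pv x) y.
Definition fq (x : V) : F := bil x x.

Lemma pvD a b x y : pv (a *: x + b *: y) = a *: pv x + b *: pv y.
Proof. by rewrite /pv mulmxDl !scalemxAl. Qed.

Lemma bil_sym x y : bil x y = bil y x.
Proof.
rewrite /bil /pv -!mulmxT_dot.
have -> : y *m A *m x^T = (x *m A *m y^T)^T.
  by rewrite !trmx_mul trmxK hAT mulmxA.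
by rewrite [RHS]mxE.
Qed.

Lemma bilDl a b x y z : bil (a *: x + b *: y) z = a * bil x z + b * bil y z.
Proof. by rewrite /bil pvD dotDl. Qed.

Lemma bilDr a b x y z : bil z (a *: x + b *: y) = a * bil z x + b * bil z y.
Proof. by rewrite /bil dotDr. Qed.

Lemma fq_comb a b x y :
  fq (a *: x + b *: y) = a ^+ 2 * fq x + 2%:R * a * b * bil x y + b ^+ 2 * fq y.
Proof.
rewrite /fq bilDl !bilDr (bil_sym y x); ring.
Qed.

Lemma bil0r x : bil x 0 = 0.
Proof. by rewrite /bil dotC dot0l. Qed.

Lemma pv_eq0 x : pv x = 0 -> x = 0.
Proof.
have hu : A \in unitmx by rewrite unitmxE unitfE.
by move=> h; rewrite -(mulmxK hu x) -/(pv x) h mul0mx.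
Qed.

Lemma pv_nz x : x != 0 -> pv x != 0.
Proof. by move=> hx; apply: contraNneq hx => /pv_eq0 ->. Qed.

Lemma conicE (v : V) : v != 0 -> (pspan v \in conic A) = (fq v == 0).
Proof.
move=> hv; rewrite inE pg_pspan //=.
apply/forall_inP/idP.
- move/(_ v (pspan_self v)); by rewrite mx11 mulmxT_dot.
- move=> /eqP h u /pspanP[c ->].
  rewrite mx11 mulmxT_dot -/(pv _) -/(bil _ _).
  have -> : c *: v = c *: v + 0 *: v by rewrite scale0r addr0.
  by rewrite bilDl !bilDr /fq in h *; rewrite h; apply/eqP; ring.
Qed.

Lemma conic_pts P : P \in conic A -> P \in pts.
Proof. by rewrite inE => /andP[]. Qed.

Lemma conicV P : P \in pts -> (P \in conic A) = (fq (vec P) == 0).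
Proof. by move=> hP; rewrite {1}(vec_eq_span hP) conicE // vec_nz. Qed.

Definition polarL (P : {set V}) : {set V} := pspan (pv (vec P)).

Lemma polar_pts P : P \in pts -> polarL P \in pts.
Proof. by move=> hP; apply: pg_pspan; apply: pv_nz; apply: vec_nz. Qed.

Lemma inc_polar P X : X \in pts -> incident X (polarL P) = (bil (vec P) (vec X) == 0).
Proof. by move=> hX; rewrite {1}(vec_eq_span hX) incE dotC. Qed.

Lemma inc_polar_sym P X : P \in pts -> X \in pts ->
  incident P (polarL X) = incident X (polarL P).
Proof. by move=> hP hX; rewrite !inc_polar // bil_sym. Qed.

Lemma polar_inj P Q : P \in pts -> Q \in pts -> polarL P = polarL Q -> P = Q.
Proof.
move=> hP hQ e.
have [c [hc e2]] := pspan_inj (pv_nz (vec_nz hP)) e.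
have : pv (1 *: vec P + (- c) *: vec Q) = 0.
  by rewrite pvD e2 scale1r scaleNr subrr.
move/pv_eq0 => e3.
have e4 : vec P = c *: vec Q.
  by apply/eqP; rewrite -subr_eq0 -scaleNr -[vec P]scale1r e3.
by rewrite (vec_eq_span hP) (vec_eq_span hQ) e4 pspanZ.
Qed.

Lemma no_iso_plane x y : x != 0 -> cross x y != 0 -> fq x = 0 -> fq y = 0 ->
  bil x y != 0.
Proof.
move=> hx hn fx fy; apply/eqP => b0.
have [c hc] := perp2 hn fx b0.
have [d hd] : exists d, pv y = d *: cross x y.
  by apply: perp2 => //; rewrite -/(bil y x) bil_sym.
have : pv (d *: x + (- c) *: y) = 0.
  by rewrite pvD hc hd !scalerA mulNr scaleNr [d * c]mulrC subrr.
move/pv_eq0/(indep hn) => [d0 c0].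
have c1 : c = 0 by apply/eqP; rewrite -oppr_eq0 c0.
have : pv x = 0 by rewrite hc c1 scale0r.
by move/pv_eq0 => e; rewrite e eqxx in hx.
Qed.

Lemma three_conic X Y Z L : X \in conic A -> Y \in conic A -> Z \in conic A ->
  X != Y -> X != Z -> Y != Z -> L \in pts ->
  incident X L -> incident Y L -> incident Z L -> False.
Proof.
move=> hX hY hZ nXY nXZ nYZ hL iX iY iZ.
have pX := conic_pts hX; have pY := conic_pts hY; have pZ := conic_pts hZ.
have hn := jn_cross pX pY nXY.
move: hX hY hZ; rewrite !conicV // => /eqP fx /eqP fy /eqP fz.
move: iX iY iZ; rewrite !incV // => /eqP ix /eqP iy /eqP iz.
have [c hc] := perp2 hn (etrans (dotC _ _) ix) (etrans (dotC _ _) iy).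
have c0 : c != 0 by apply: contraNneq (vec_nz hL) => c0; rewrite hc c0 scale0r.
have : dot (vec Z) (cross (vec X) (vec Y)) = 0.
  by move: iz; rewrite hc dotZr => /eqP; rewrite mulf_eq0 (negbTE c0) => /eqP.
case/(span2 hn) => a [b hab].
have hb := no_iso_plane (vec_nz pX) hn fx fy.
move: fz; rewrite hab fq_comb fx fy !mulr0 addr0 add0r => /eqP.
rewrite !mulf_eq0 (negbTE h2) (negbTE hb) /= orbF => /orP[] /eqP ab0.
- have hb0 : b != 0.
    by apply: contraNneq (vec_nz pZ) => b0; rewrite hab ab0 b0 !scale0r addr0.
  have e : Z = Y.
    by rewrite (vec_eq_span pZ) hab ab0 scale0r add0r pspanZ // -(vec_eq_span pY).
  by rewrite e eqxx in nYZ.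
- have ha0 : a != 0.
    by apply: contraNneq (vec_nz pZ) => a0; rewrite hab ab0 a0 !scale0r addr0.
  have e : Z = X.
    by rewrite (vec_eq_span pZ) hab ab0 scale0r addr0 pspanZ // -(vec_eq_span pX).
  by rewrite e eqxx in nXZ.
Qed.


Lemma comb_sub a b c (x y : V) : (a - c) *: x + b *: y = (a *: x + b *: y) - c *: x.
Proof. vr. Qed.

Lemma polar_self P : P \in conic A -> incident P (polarL P).
Proof.
move=> hP; have pP := conic_pts hP.
by rewrite inc_polar // -/(fq _) -conicV.
Qed.

Lemma polar_conic_uniq P X : P \in conic A -> X \in conic A ->
  incident X (polarL P) -> X = P.
Proof.
move=> hP hX; have pP := conic_pts hP; have pX := conic_pts hX.
rewrite inc_polar //; apply: contraTeq => nXP.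
have nPX : P != X by rewrite eq_sym.
have hn := jn_cross pP pX nPX.
move: hP hX; rewrite !conicV // => /eqP fp /eqP fx.
by apply: no_iso_plane => //; apply: vec_nz.
Qed.

Lemma tangent_polar P : P \in conic A -> tangent A (polarL P).
Proof.
move=> hP; rewrite /tangent polar_pts ?conic_pts //=.
apply/cards1P; exists P; apply/setP => X; rewrite in_set1 in_set.
apply/idP/idP => [/andP[hX iX]|/eqP ->].
  by apply/eqP; apply: polar_conic_uniq.
by rewrite hP polar_self.
Qed.

Definition second (x y : V) : V := fq y *: x + (- (2%:R * bil x y)) *: y.

Lemma second_fq x y : fq x = 0 -> fq (second x y) = 0.
Proof. by move=> fx; rewrite /second fq_comb fx; ring. Qed.

Lemma second_nz x y : cross x y != 0 -> bil x y != 0 -> second x y != 0.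
Proof.
move=> hn hb; apply: nz_comb' => //.
by rewrite oppr_eq0 mulf_eq0 negb_or h2.
Qed.

Lemma second_neq x y : cross x y != 0 -> bil x y != 0 -> pspan (second x y) != pspan x.
Proof.
move=> hn hb; apply/eqP => e.
have [c [hc e2]] := pspan_inj (second_nz hn hb) e.
have : (fq y - c) *: x + (- (2%:R * bil x y)) *: y = 0.
  by rewrite comb_sub -/(second x y) e2 subrr.
by case/(indep hn) => _ /eqP; rewrite oppr_eq0 mulf_eq0 (negbTE h2) (negbTE hb).
Qed.

Lemma second_on x y w : dot x w = 0 -> dot y w = 0 -> dot (second x y) w = 0.
Proof. by move=> h1 h3; rewrite /second dotDl h1 h3 !mulr0 addr0. Qed.

Lemma tangentP L : tangent A L -> exists2 X, X \in conic A & L = polarL X.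
Proof.
case/andP => hL /cards1P [X eX].
have : X \in [set P in conic A | incident P L] by rewrite eX set11.
rewrite inE => /andP[hX iX]; exists X => //.
have pX := conic_pts hX.
have : (0 < #|[set P in pts | incident P L] :\ X|)%N.
  have := cardsD1 X [set P in pts | incident P L].
  rewrite line_card // inE pX iX add1n => -[<-].
  by apply/card_gt0P; exists 0.
case/card_gt0P => Y; rewrite !inE => /and3P[nYX pY iY].
have nXY : X != Y by rewrite eq_sym.
have hn := jn_cross pX pY nXY.
case: (eqVneq (bil (vec X) (vec Y)) 0) => hb.
- apply: (line_uniq pX pY hL (polar_pts pX) nXY iX iY (polar_self hX)).
  by rewrite inc_polar // hb.
- exfalso.
  have fx : fq (vec X) = 0 by apply/eqP; rewrite -conicV.
  pose Z := pspan (second (vec X) (vec Y)).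
  have hZ : Z \in [set P in conic A | incident P L].
    have dX : dot (vec X) (vec L) = 0 by apply/eqP; rewrite -incV.
    have dY : dot (vec Y) (vec L) = 0 by apply/eqP; rewrite -incV.
    rewrite inE conicE ?second_nz // second_fq // eqxx /=.
    by rewrite (vec_eq_span hL) incE second_on.
  move: hZ; rewrite eX inE => /eqP eZ.
  by move: (second_neq hn hb); rewrite -/Z eZ -(vec_eq_span pX) eqxx.
Qed.


Definition TP (P : {set V}) := [set L in pts | tangent A L && incident P L].

Lemma tau_conic P : P \in conic A -> (#|TP P| <= 1)%N.
Proof.
move=> hP; have pP := conic_pts hP.
apply: (@leq_trans #|[set polarL P]|); last by rewrite cards1.
apply: subset_leq_card; apply/subsetP => L; rewrite inE => /and3P[hL tL iL].
have [X hX eL] := tangentP tL.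
rewrite eL inc_polar_sym ?conic_pts // in iL.
by rewrite eL (polar_conic_uniq hP hX iL) set11.
Qed.

Lemma tau_nonconic P : P \in pts -> P \notin conic A -> #|TP P| = 0%N \/ #|TP P| = 2.
Proof.
move=> pP nP.
pose S := [set X in conic A | incident X (polarL P)].
have eT : TP P = polarL @: S.
  apply/setP => L; apply/idP/imsetP.
  - rewrite inE => /and3P[hL tL iL].
    have [X hX eL] := tangentP tL.
    exists X => //; rewrite inE hX /=.
    by rewrite -(inc_polar_sym pP (conic_pts hX)) -eL.
  - case=> X; rewrite inE => /andP[hX iX] ->.
    rewrite inE polar_pts ?conic_pts // tangent_polar //=.
    by rewrite (inc_polar_sym pP (conic_pts hX)).
have cT : #|TP P| = #|S|.
  rewrite eT card_in_imset //.
  move=> X Y /setIdP[hX _] /setIdP[hY _].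
  exact: polar_inj (conic_pts hX) (conic_pts hY).
have le2 : (#|S| <= 2)%N.
  rewrite leqNgt; apply/negP => /card_gt2P [X [Y [Z [[hX hY hZ] [nXY nYZ nZX]]]]].
  move: hX hY hZ => /setIdP[hX iX] /setIdP[hY iY] /setIdP[hZ iZ].
  have nXZ : X != Z by rewrite eq_sym.
  exact: (three_conic hX hY hZ nXY nXZ nYZ (polar_pts pP) iX iY iZ).
have ne1 : #|S| != 1%N.
  apply/negP => h1.
  have tP : tangent A (polarL P) by rewrite /tangent polar_pts // h1.
  have [X hX e] := tangentP tP.
  by move: nP; rewrite (polar_inj pP (conic_pts hX) e) hX.
rewrite cT; move: le2 ne1; case: #|S| => [|[|[|n]]] //; by [left|right].
Qed.

End Conic.
Section Squares.
Variable F : finFieldType.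
Hypothesis hodd : odd #|F|.

Definition Sq : {set F} := [set x ^+ 2 | x in [set: F]].

Lemma fiber_le2 (j : F) : (#|[set x : F | x ^+ 2 == j]| <= 2)%N.
Proof.
case: (set_0Vmem [set x : F | x ^+ 2 == j]) => [->|[x0]]; first by rewrite cards0.
rewrite inE => /eqP hx0.
apply: (@leq_trans #|[set x0; - x0]|); last by rewrite cards2; case: (_ != _).
apply: subset_leq_card; apply/subsetP => x; rewrite !inE => /eqP hx.
have : (x - x0) * (x + x0) == 0.
  have -> : (x - x0) * (x + x0) = x ^+ 2 - x0 ^+ 2 by ring.
  by rewrite hx hx0 subrr.
rewrite mulf_eq0 subr_eq0 => /orP[->//|].
by rewrite addr_eq0 => ->; rewrite orbT.
Qed.

Lemma sq_card : ((#|F|).+1 <= 2 * #|Sq|)%N.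
Proof.
have e : #|F| = (\sum_(j in Sq) #|[set x : F | x ^+ 2 == j]|)%N.
  rewrite -cardsT -sum1_card (partition_big_imset (fun x : F => x ^+ 2) [set: F]) /=.
  apply: eq_bigr => j _; rewrite -sum1_card; apply: eq_bigl => x.
  by rewrite !inE.
have le : (#|F| <= 2 * #|Sq|)%N.
  rewrite e mulnC -sum_nat_const; apply: leq_sum => j _; exact: fiber_le2.
rewrite ltn_neqAle le andbT; apply: contraTneq hodd => ->.
by rewrite oddM.
Qed.

Lemma pigeon (a1 a2 a3 : F) : a1 != 0 -> a2 != 0 ->
  exists x y : F, a1 * x ^+ 2 + a2 * y ^+ 2 + a3 = 0.
Proof.
move=> h1 h2.
pose S1 := (fun s => a1 * s) @: Sq.
pose S2 := (fun s => - a3 - a2 * s) @: Sq.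
have c1 : #|S1| = #|Sq| by rewrite card_imset //; apply: mulfI.
have c2 : #|S2| = #|Sq|.
  rewrite card_imset // => s t /addrI /oppr_inj; exact: mulfI.
have := cardsUI S1 S2; rewrite c1 c2 addnn -mul2n => hU.
have : (0 < #|S1 :&: S2|)%N.
  have := sq_card; rewrite -hU => h.
  have hmax : (#|S1 :|: S2| <= #|F|)%N by apply: max_card.
  rewrite lt0n; apply/negP => /eqP h0; move: h; rewrite h0 addn0 => h.
  by have := leq_trans h hmax; rewrite ltnn.
case/card_gt0P => t; rewrite inE => /andP[/imsetP[s1 /imsetP[x _ ->] ->]].
case/imsetP => s2 /imsetP[y _ ->] e.
exists x, y; rewrite e; ring.
Qed.

End Squares.

Section ConicCount.
Variable F : finFieldType.
Local Notation V := 'rV[F]_3.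
Local Notation pts := (pg_points F).
Variable A : 'M[F]_3.
Hypothesis hAT : A^T = A.
Hypothesis hdet : \det A != 0.
Hypothesis hodd : odd #|F|.
Hypothesis h2 : (2%:R : F) != 0.

Local Notation pv := (pv A).
Local Notation bil := (bil A).
Local Notation fq := (fq A).
Local Notation polarL := (polarL A).

Lemma bilZr a x z : bil z (a *: x) = a * bil z x.
Proof. by rewrite /bil dotZr. Qed.

Lemma iso_exists : exists v : V, v != 0 /\ fq v = 0.
Proof.
case: (boolP [exists v : V, (v != 0) && (fq v == 0)]) =>
   [/existsP[v /andP[hv /eqP fv]]|/existsPn hno]; first by exists v.
have aniso v : v != 0 -> fq v != 0 by move=> hv; move: (hno v); rewrite hv.
pose e1 : V := mk3 1 0 0.
have he1 : e1 != 0.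
  apply/eqP => e; have := congr1 (fun z : V => z ord0 i0) e.
  by rewrite mk3_0 zero_comp => /eqP; rewrite oner_eq0.
have hw1 := pv_nz hdet he1.
have [u [v [k [hk huv]]]] := perp_basis hw1.
have hn : cross u v != 0 by rewrite huv scaler_eq0 negb_or hk hw1.
have hu : u != 0 by apply: contraNneq hn => ->; rewrite cross0l.
have b12 : bil e1 u = 0.
  have := dot_cross_l u v; rewrite huv dotZr => /eqP.
  by rewrite mulf_eq0 (negbTE hk) /= => /eqP; rewrite dotC.
have hw2 := pv_nz hdet hu.
have h3 : cross (pv e1) (pv u) != 0.
  apply/eqP => /(cross_eq0 hw2) [c hc].
  have : pv (1 *: e1 + (- c) *: u) = 0 by rewrite pvD scale1r hc scaleNr subrr.
  move/(pv_eq0 hdet) => e.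
  have e' : e1 = c *: u by apply/eqP; rewrite -subr_eq0 -scaleNr -[e1]scale1r e.
  have := aniso e1 he1; rewrite /fq {2}e' bilZr b12 mulr0 eqxx //.
pose e3 := cross (pv e1) (pv u).
have b13 : bil e1 e3 = 0 by rewrite /bil dot_cross_l.
have b23 : bil u e3 = 0 by rewrite /bil dot_cross_r.
have [x [y hxy]] := pigeon hodd (fq e3) (aniso e1 he1) (aniso u hu).
pose s := x *: e1 + y *: u.
pose w := 1 *: s + 1 *: e3.
have bs3 : bil s e3 = 0 by rewrite bilDl b13 b23 !mulr0 addr0.
exists w; split.
- apply/eqP => w0.
  have : bil e3 w = fq e3.
    by rewrite /w bilDr bil_sym // bs3 mulr0 add0r mul1r.
  rewrite w0 bil0r => /eqP; rewrite eq_sym; apply/negP; exact: aniso.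
- rewrite /w fq_comb // bs3 /s fq_comb // b12.
  by rewrite -[RHS]hxy; ring.
Qed.

Lemma second_cross x y : dot y (cross x (second A x y)) = 0.
Proof.
by rewrite /second crossDr cross_self scaler0 add0r dotZr dot_cross_r mulr0.
Qed.

Lemma conic_big : ((#|F|).+1 <= #|conic A|)%N.
Proof.
have [v0 [hv0 fv0]] := iso_exists.
pose X := pspan v0.
have cX : X \in conic A by rewrite conicE // fv0.
have pX : X \in pts by exact: conic_pts cX.
set x := vec X.
have fx : fq x = 0 by apply/eqP; rewrite -conicV.
have [e he] := nonperp (vec_nz pX).
have e0 : e != 0 by apply: contraNneq he => ->; rewrite dot0l.
pose L := pspan e.
have pL : L \in pts by exact: pg_pspan.
have nXL : ~~ incident X L by rewrite /L {1}(vec_eq_span pX) incE dotC.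
have nLp : L != polarL X.
  by apply: contraNneq nXL => ->; apply: polar_self.
pose PL := [set Y in pts | incident Y L].
pose Pol := [set Y in pts | incident Y (polarL X)].
pose S' := PL :\: Pol.
have cS' : (#|F| <= #|S'|)%N.
  have := cardsID Pol PL; rewrite line_card // => h.
  have : (#|PL :&: Pol| <= 1)%N.
    apply/card_le1_eqP => Y Y'; rewrite !inE.
    move=> /andP[/andP[pY iY] /andP[_ jY]] /andP[/andP[pY' iY'] /andP[_ jY']].
    by apply: esym; exact: (pt_uniq pY pY' pL (polar_pts hdet pX) nLp iY jY iY' jY').
  move=> h1; rewrite /S'; lia.
have memS Y : Y \in S' -> [/\ Y \in pts, incident Y L & bil x (vec Y) != 0].
  rewrite !inE => /andP[hY /andP[pY iY]]; split => //.
  by move: hY; rewrite pY /= inc_polar.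
have nYX Y : Y \in S' -> X != Y.
  by case/memS => pY iY _; apply: contraNneq nXL => ->.
pose g := fun Y => pspan (second A x (vec Y)).
have gP Y : Y \in S' -> g Y \in conic A /\ g Y != X.
  move=> hY; have [pY iY hb] := memS Y hY.
  have hn := jn_cross pX pY (nYX Y hY).
  split; first by rewrite /g conicE ?second_nz ?second_fq ?eqxx.
  by rewrite (vec_eq_span pX); apply: second_neq.
have incg Y : Y \in S' -> incident Y (jn X (g Y)).
  move=> hY; have [pY iY hb] := memS Y hY.
  have hn := jn_cross pX pY (nYX Y hY).
  have pZ : g Y \in pts by apply: pg_pspan; apply: second_nz.
  have [c [hc ec]] := pspan_inj (vec_nz pZ) (esym (vec_eq_span pZ)).
  by rewrite /jn {1}(vec_eq_span pY) incE ec crossZr dotZr second_cross mulr0.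
have inj : {in S' &, injective g}.
  move=> Y Y' hY hY' eg.
  have [pY iY _] := memS Y hY; have [pY' iY' _] := memS Y' hY'.
  have [gc gn] := gP Y hY.
  have pZ := conic_pts gc.
  have nXZ : X != g Y by rewrite eq_sym.
  have [pM iXM _] := jnP pX pZ nXZ.
  have nML : jn X (g Y) != L by apply: contraNneq nXL => <-.
  have i1 := incg Y hY; have i2 := incg Y' hY'; rewrite -eg in i2.
  by apply: (pt_uniq pY pY' pM pL nML i1 iY i2 iY').
have sub : X |: g @: S' \subset conic A.
  apply/subsetP => Z; rewrite in_setU1 => /orP[/eqP ->//|/imsetP[Y hY ->]].
  by case: (gP Y hY).
have nX : X \notin g @: S'.
  by apply/imsetP => -[Y hY eg]; case: (gP Y hY) => _; rewrite -eg eqxx.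
have := subset_leq_card sub; rewrite cardsU1 nX card_in_imset // add1n.
by apply: leq_trans; rewrite ltnS.
Qed.

End ConicCount.



Section PascalAlg.
Variable F : finFieldType.
Local Notation V := 'rV[F]_3.
Variables (p1 p2 p3 : V).

Definition comb (c : V) : V := c ord0 i0 *: p1 + c ord0 i1 *: p2 + c ord0 i2 *: p3.

Lemma comb_det u v w : dot (comb u) (cross (comb v) (comb w)) =
   dot u (cross v w) * dot p1 (cross p2 p3).
Proof. rewrite /comb /dot /cross !mxE /=; ring. Qed.

Lemma comb_bil (A : 'M[F]_3) u v : bil A (comb u) (comb v) =
  u ord0 i0 * v ord0 i0 * bil A p1 p1 + u ord0 i0 * v ord0 i1 * bil A p1 p2 +
  u ord0 i0 * v ord0 i2 * bil A p1 p3 + u ord0 i1 * v ord0 i0 * bil A p2 p1 +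
  u ord0 i1 * v ord0 i1 * bil A p2 p2 + u ord0 i1 * v ord0 i2 * bil A p2 p3 +
  u ord0 i2 * v ord0 i0 * bil A p3 p1 + u ord0 i2 * v ord0 i1 * bil A p3 p2 +
  u ord0 i2 * v ord0 i2 * bil A p3 p3.
Proof.
rewrite /comb /bil /pv !mulmxDl -!scalemxAl.
rewrite /dot !mxE /=; ring.
Qed.

End PascalAlg.

Section Pascal.
Variable F : finFieldType.
Local Notation V := 'rV[F]_3.
Local Notation pts := (pg_points F).
Variable A : 'M[F]_3.
Hypothesis hAT : A^T = A.
Hypothesis hdet : \det A != 0.
Hypothesis h2 : (2%:R : F) != 0.
Variables (B Ls : {set {set V}}).
Hypothesis hB : B \subset pts.
Hypothesis hLs : Ls \subset pts.
Hypothesis hjoin : forall P Q, P \in B -> Q \in B -> P != Q ->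
            exists2 L, L \in Ls & incident P L && incident Q L.
Hypothesis hmeet : forall L M, L \in Ls -> M \in Ls -> L != M ->
            exists2 P, P \in B & incident P L && incident P M.

Local Notation bil := (bil A).
Local Notation fq := (fq A).

Lemma noncol3 X Y Z : X \in conic A -> Y \in conic A -> Z \in conic A ->
  X != Y -> X != Z -> Y != Z -> dot (vec X) (cross (vec Y) (vec Z)) != 0.
Proof.
move=> cX cY cZ nXY nXZ nYZ; apply/eqP => h.
have pX := conic_pts cX; have pY := conic_pts cY; have pZ := conic_pts cZ.
have [pL iY iZ] := jnP pY pZ nYZ.
have iX : incident X (jn Y Z) by rewrite /jn {1}(vec_eq_span pX) incE h.
exact: (three_conic hAT hdet h2 cX cY cZ nXY nXZ nYZ pL iX iY iZ).
Qed.

Lemma fqZ c x : fq (c *: x) = c ^+ 2 * fq x.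
Proof.
have -> : c *: x = c *: x + 0 *: x by rewrite scale0r addr0.
by rewrite fq_comb //; ring.
Qed.

Lemma inc_self (x y : V) : incident (pspan x) (pspan (cross x y)).
Proof. by rewrite incE dot_cross_l. Qed.
Lemma inc_self' (x y : V) : incident (pspan y) (pspan (cross x y)).
Proof. by rewrite incE dot_cross_r. Qed.

Lemma line_pts' (x y : V) : x != 0 -> y != 0 -> pspan x != pspan y ->
  pspan (cross x y) \in pts.
Proof. by move=> hx hy hxy; apply: pg_pspan; apply: pspan_cross. Qed.

Lemma pascal P1 P2 P3 P4 P5 :
  P1 \in conic A -> P2 \in conic A -> P3 \in conic A -> P4 \in conic A -> P5 \in conic A ->
  P1 \in B -> P2 \in B -> P3 \in B -> P4 \in B -> P5 \in B ->
  P1 != P2 -> P1 != P3 -> P1 != P4 -> P1 != P5 -> P2 != P3 -> P2 != P4 -> P2 != P5 ->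
  P3 != P4 -> P3 != P5 -> P4 != P5 ->
  polarL A P1 \in Ls.
Proof.
move=> c1 c2 c3 c4 c5 m1 m2 m3 m4 m5 n12 n13 n14 n15 n23 n24 n25 n34 n35 n45.
have pt1 := conic_pts c1; have pt2 := conic_pts c2; have pt3 := conic_pts c3.
have pt4 := conic_pts c4; have pt5 := conic_pts c5.
have col X Y Z L : X \in conic A -> Y \in conic A -> Z \in conic A ->
   X != Y -> X != Z -> Y != Z -> L \in pts ->
   incident X L -> incident Y L -> incident Z L -> False.
  exact: (@three_conic _ _ hAT hdet h2 X Y Z L).
set p1 := vec P1; set p2 := vec P2; set p3 := vec P3; set p4 := vec P4; set p5 := vec P5.
have D0 : dot p1 (cross p2 p3) != 0 by apply: noncol3.
pose cb := comb p1 p2 p3.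
have incc u v w : incident (pspan (cb u)) (pspan (cross (cb v) (cb w))) =
                    (dot u (cross v w) == 0).
  by rewrite incE comb_det mulf_eq0 (negbTE D0) orbF.
have cbnz u : u != 0 -> cb u != 0.
  move=> hu; have [e he] := nonperp hu.
  have he0 : e != 0 by apply: contraNneq he => ->; rewrite dot0l.
  have [v [w [k [hk hvw]]]] := perp_basis he0.
  apply/eqP => h0; have := comb_det p1 p2 p3 u v w.
  rewrite -/cb h0 dot0l hvw dotZr dotC => /esym/eqP.
  by rewrite !mulf_eq0 (negbTE hk) (negbTE he) (negbTE D0).
have cbmk a b c : cb (mk3 a b c) = a *: p1 + b *: p2 + c *: p3.
  by rewrite /cb /comb mk3_0 mk3_1 mk3_2.
pose a1 := dot p4 (cross p2 p3); pose a2 := dot p1 (cross p4 p3); pose a3 := dot p1 (cross p2 p4).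
pose b1 := dot p5 (cross p2 p3); pose b2 := dot p1 (cross p5 p3); pose b3 := dot p1 (cross p2 p5).
have n42 : P4 != P2 by rewrite eq_sym.
have n43 : P4 != P3 by rewrite eq_sym.
have n52 : P5 != P2 by rewrite eq_sym.
have n53 : P5 != P3 by rewrite eq_sym.
have a1n : a1 != 0 by exact: (noncol3 c4 c2 c3 n42 n43 n23).
have a2n : a2 != 0 by exact: (noncol3 c1 c4 c3 n14 n13 n43).
have a3n : a3 != 0 by exact: (noncol3 c1 c2 c4 n12 n14 n24).
have b1n : b1 != 0 by exact: (noncol3 c5 c2 c3 n52 n53 n23).
have b2n : b2 != 0 by exact: (noncol3 c1 c5 c3 n15 n13 n53).
have b3n : b3 != 0 by exact: (noncol3 c1 c2 c5 n12 n15 n25).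
pose e1 : V := mk3 1 0 0; pose e2 : V := mk3 0 1 0; pose e3 : V := mk3 0 0 1.
pose av : V := mk3 a1 a2 a3; pose bv : V := mk3 b1 b2 b3.
have E1 : P1 = pspan (cb e1).
  by rewrite cbmk scale1r !scale0r !addr0 (vec_eq_span pt1).
have E2 : P2 = pspan (cb e2).
  by rewrite cbmk scale1r !scale0r add0r addr0 (vec_eq_span pt2).
have E3 : P3 = pspan (cb e3).
  by rewrite cbmk scale1r !scale0r !add0r (vec_eq_span pt3).
have E4 : P4 = pspan (cb av).
  by rewrite cbmk -cramer pspanZ // -(vec_eq_span pt4).
have E5 : P5 = pspan (cb bv).
  by rewrite cbmk -cramer pspanZ // -(vec_eq_span pt5).
have z1 : cb e1 != 0 by rewrite cbmk scale1r !scale0r !addr0 vec_nz.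
have z2 : cb e2 != 0 by rewrite cbmk scale1r !scale0r add0r addr0 vec_nz.
have z3 : cb e3 != 0 by rewrite cbmk scale1r !scale0r !add0r vec_nz.
have z4 : cb av != 0 by rewrite cbmk -cramer scaler_eq0 negb_or D0 vec_nz.
have z5 : cb bv != 0 by rewrite cbmk -cramer scaler_eq0 negb_or D0 vec_nz.
have lineLs x y : pspan x \in B -> pspan y \in B -> pspan x != pspan y -> x != 0 -> y != 0 ->
    pspan (cross x y) \in Ls.
  move=> hx hy hxy x0 y0.
  exact: (BF_join hB hLs hjoin hx hy hxy (line_pts' x0 y0 hxy) (inc_self _ _) (inc_self' _ _)).
have meetB x L M : L \in Ls -> M \in Ls -> L != M -> x != 0 ->
    incident (pspan x) L -> incident (pspan x) M -> pspan x \in B.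
  move=> hL hM hLM x0 i1 i2.
  exact: (BF_meet hB hLs hmeet hL hM hLM (pg_pspan x0) i1 i2).
have Lpts x y : pspan x \in pts -> pspan y \in pts -> pspan x != pspan y -> x != 0 -> y != 0 ->
    pspan (cross x y) \in pts.
  by move=> _ _ hxy x0 y0; apply: line_pts'.
pose L12 := pspan (cross (cb e1) (cb e2)).
pose L45 := pspan (cross (cb av) (cb bv)).
pose L23 := pspan (cross (cb e2) (cb e3)).
pose L51 := pspan (cross (cb bv) (cb e1)).
pose L34 := pspan (cross (cb e3) (cb av)).
have hL12 : L12 \in Ls by apply: lineLs; rewrite -?E1 -?E2.
have hL45 : L45 \in Ls by apply: lineLs; rewrite -?E4 -?E5.
have hL23 : L23 \in Ls by apply: lineLs; rewrite -?E2 -?E3.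
have hL51 : L51 \in Ls by apply: lineLs; rewrite -?E5 -?E1 // eq_sym.
have hL34 : L34 \in Ls by apply: lineLs; rewrite -?E3 -?E4.
have lp L : L \in Ls -> L \in pts by move=> hL; apply: (subsetP hLs).
have i1_12 : incident P1 L12 by rewrite E1 inc_self.
have i2_12 : incident P2 L12 by rewrite E2 inc_self'.
have i4_45 : incident P4 L45 by rewrite E4 inc_self.
have i5_45 : incident P5 L45 by rewrite E5 inc_self'.
have i2_23 : incident P2 L23 by rewrite E2 inc_self.
have i3_23 : incident P3 L23 by rewrite E3 inc_self'.
have i5_51 : incident P5 L51 by rewrite E5 inc_self.
have i1_51 : incident P1 L51 by rewrite E1 inc_self'.
have i3_34 : incident P3 L34 by rewrite E3 inc_self.
have i4_34 : incident P4 L34 by rewrite E4 inc_self'.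
pose y1 := b3 * a1 - a3 * b1; pose y2 := b3 * a2 - a3 * b2.
pose yv : V := mk3 y1 y2 0.
pose zv : V := mk3 0 b2 b3.
pose al := b2 * a1; pose ga := y1 * a2 - y2 * a1.
pose wv : V := mk3 (al * y1) (al * y2 + ga * b2) (ga * b3).
have eyv : cb yv = b3 *: cb av - a3 *: cb bv.
  rewrite !cbmk; apply: vec_eq; rewrite !mxE /y1 /y2; ring.
have zy : cb yv != 0.
  apply/eqP => h0; move: eyv; rewrite h0 => /eqP; rewrite eq_sym subr_eq0 => /eqP e.
  have e' : cb bv = (b3 / a3) *: cb av.
    by rewrite mulrC -scalerA e scalerA mulVf // scale1r.
  have : P5 = P4 by rewrite E5 E4 e' pspanZ // mulf_neq0 // invr_eq0.
  by move/eqP; rewrite eq_sym (negbTE n45).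
have zz : cb zv != 0.
  apply/eqP => h0; have := comb_det p1 p2 p3 zv e1 e2.
  rewrite -/cb h0 dot0l => /esym/eqP; rewrite mulf_eq0 (negbTE D0) orbF.
  rewrite (_ : dot zv (cross e1 e2) = b3) ?(negbTE b3n) //.
  by rewrite /dot /cross !mxE /=; ring.
have zw : cb wv != 0.
  apply/eqP => h0.
  have := comb_det p1 p2 p3 wv e1 e2; rewrite -/cb h0 dot0l => /esym/eqP.
  rewrite mulf_eq0 (negbTE D0) orbF.
  rewrite (_ : dot wv (cross e1 e2) = ga * b3); last by rewrite /dot /cross !mxE /=; ring.
  rewrite mulf_eq0 (negbTE b3n) orbF => /eqP g0.
  have := comb_det p1 p2 p3 wv e2 e3; rewrite -/cb h0 dot0l => /esym/eqP.
  rewrite mulf_eq0 (negbTE D0) orbF.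
  rewrite (_ : dot wv (cross e2 e3) = al * y1); last by rewrite /dot /cross !mxE /=; ring.
  rewrite mulf_eq0 mulf_eq0 (negbTE b2n) (negbTE a1n) /= => /eqP y10.
  have y20 : y2 = 0.
    move: g0; rewrite /ga y10 mul0r sub0r => /eqP; rewrite oppr_eq0 mulf_eq0 (negbTE a1n) orbF.
    by move/eqP.
  by move: zy; rewrite cbmk y10 y20 !scale0r !addr0 eqxx.
pose PY := pspan (cb yv); pose PZ := pspan (cb zv); pose PW := pspan (cb wv).
have ptY : PY \in pts by apply: pg_pspan.
have ptZ : PZ \in pts by apply: pg_pspan.
have ptW : PW \in pts by apply: pg_pspan.
have iY12 : incident PY L12 by rewrite /PY /L12 incc /dot /cross !mxE /=; apply/eqP; ring.
have iY45 : incident PY L45.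
  by rewrite /PY /L45 incc /dot /cross !mxE /= /y1 /y2; apply/eqP; ring.
have iZ23 : incident PZ L23 by rewrite /PZ /L23 incc /dot /cross !mxE /=; apply/eqP; ring.
have iZ51 : incident PZ L51 by rewrite /PZ /L51 incc /dot /cross !mxE /=; apply/eqP; ring.
have iW34 : incident PW L34.
  by rewrite /PW /L34 incc /dot /cross !mxE /= /ga /al; apply/eqP; ring.
have n21 : P2 != P1 by rewrite eq_sym.
have n12_45 : L12 != L45.
  apply/eqP => e; move: i4_45; rewrite -e => i4.
  exact: (col P1 P2 P4 L12 c1 c2 c4 n12 n14 n24 (lp _ hL12) i1_12 i2_12 i4).
have n23_51 : L23 != L51.
  apply/eqP => e; move: i1_51; rewrite -e => i1.
  exact: (col P1 P2 P3 L23 c1 c2 c3 n12 n13 n23 (lp _ hL23) i1 i2_23 i3_23).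
have n12_23 : L12 != L23.
  apply/eqP => e; move: i3_23; rewrite -e => i3.
  exact: (col P1 P2 P3 L12 c1 c2 c3 n12 n13 n23 (lp _ hL12) i1_12 i2_12 i3).
have n34_45 : L34 != L45.
  apply/eqP => e; move: i5_45; rewrite -e => i5.
  exact: (col P3 P4 P5 L34 c3 c4 c5 n34 n35 n45 (lp _ hL34) i3_34 i4_34 i5).
have bY : PY \in B by exact: (meetB _ L12 L45 hL12 hL45 n12_45 zy iY12 iY45).
have bZ : PZ \in B by exact: (meetB _ L23 L51 hL23 hL51 n23_51 zz iZ23 iZ51).
have nYZ : PY != PZ.
  apply/eqP => e.
  have iZ12 : incident PZ L12 by rewrite -e.
  have eY2 : PZ = P2.
    exact: (pt_uniq ptZ pt2 (lp _ hL12) (lp _ hL23) n12_23 iZ12 iZ23 i2_12 i2_23).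
  have i2 : incident P2 L45 by rewrite -eY2 -e.
  exact: (col P2 P4 P5 L45 c2 c4 c5 n24 n25 n45 (lp _ hL45) i2 i4_45 i5_45).
pose LYZ := pspan (cross (cb yv) (cb zv)).
have hLYZ : LYZ \in Ls by exact: (lineLs _ _ bY bZ nYZ zy zz).
have iY_YZ : incident PY LYZ by exact: inc_self.
have iW_YZ : incident PW LYZ.
  by rewrite /PW /LYZ incc /dot /cross !mxE /= /ga /al; apply/eqP; ring.
have nYZ34 : LYZ != L34.
  apply/eqP => e.
  have iY34 : incident PY L34 by rewrite -e.
  have eY4 : PY = P4.
    exact: (pt_uniq ptY pt4 (lp _ hL34) (lp _ hL45) n34_45 iY34 iY45 i4_34 i4_45).
  have i4 : incident P4 L12 by rewrite -eY4.
  exact: (col P1 P2 P4 L12 c1 c2 c4 n12 n14 n24 (lp _ hL12) i1_12 i2_12 i4).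
have bW : PW \in B by exact: (meetB _ LYZ L34 hLYZ hL34 nYZ34 zw iW_YZ iW34).
have nW1 : P1 != PW.
  apply/eqP => e.
  have i1 : incident P1 L34 by rewrite e.
  exact: (col P1 P3 P4 L34 c1 c3 c4 n13 n14 n34 (lp _ hL34) i1 i3_34 i4_34).
have fz x : x \in conic A -> fq (vec x) = 0.
  by move=> hx; apply/eqP; rewrite -(conicV A (conic_pts hx)).
have Ea : fq (cb av) = 0.
  by rewrite cbmk -cramer fqZ (fz P4 c4) mulr0.
have Eb : fq (cb bv) = 0.
  by rewrite cbmk -cramer fqZ (fz P5 c5) mulr0.
have f1 := fz P1 c1; have f2 := fz P2 c2; have f3 := fz P3 c3.
have key : 2%:R * bil (cb e1) (cb wv) = b2 * b3 * fq (cb av) - a2 * a3 * fq (cb bv).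
  rewrite /fq !comb_bil !mk3_0 !mk3_1 !mk3_2.
  rewrite (bil_sym hAT p2 p1) (bil_sym hAT p3 p1) (bil_sym hAT p3 p2).
  rewrite /fq in f1 f2 f3; rewrite f1 f2 f3 /ga /al /y1 /y2; ring.
have bW0 : bil p1 (cb wv) = 0.
  have e1p : cb e1 = p1 by rewrite cbmk scale1r !scale0r !addr0.
  move: key; rewrite Ea Eb !mulr0 subrr e1p => /eqP.
  by rewrite mulf_eq0 (negbTE h2) /= => /eqP.
have iWp : incident PW (polarL A P1).
  by rewrite /PW /polarL incE dotC -/(bil _ _) bW0.
exact: (BF_join hB hLs hjoin m1 bW nW1 (polar_pts hdet pt1) (polar_self c1) iWp).
Qed.

End Pascal.



Lemma sum_ind (T : finType) (S : {set T}) (P : pred T) :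
  (\sum_(x in S) (P x : nat))%N = #|[set x in S | P x]|.
Proof.
rewrite -sum1_card big_mkcond [RHS]big_mkcond /=.
apply: eq_bigr => x _; rewrite inE; by case: (x \in S); case: (P x).
Qed.

Lemma four_others (T : finType) (S : {set T}) (P : T) : (4 < #|S|)%N -> P \in S ->
  exists a b c d, [/\ a \in S, b \in S, c \in S & d \in S] /\
   [/\ [/\ P != a, P != b, P != c & P != d], [/\ a != b, a != c & a != d] &
       [/\ b != c, b != d & c != d]].
Proof.
move=> hS hP.
have c1 : (3 < #|S :\ P|)%N by move: hS; rewrite (cardsD1 P S) hP.
have [a ha] : exists a, a \in S :\ P by apply/card_gt0P; apply: leq_trans c1.
have c2 : (2 < #|S :\ P :\ a|)%N by move: c1; rewrite (cardsD1 a (S :\ P)) ha.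
have [b hb] : exists b, b \in S :\ P :\ a by apply/card_gt0P; apply: leq_trans c2.
have c3 : (1 < #|S :\ P :\ a :\ b|)%N by move: c2; rewrite (cardsD1 b (S :\ P :\ a)) hb.
have [c hc] : exists c, c \in S :\ P :\ a :\ b by apply/card_gt0P; apply: leq_trans c3.
have c4 : (0 < #|S :\ P :\ a :\ b :\ c|)%N by move: c3; rewrite (cardsD1 c (S :\ P :\ a :\ b)) hc.
have [d hd] : exists d, d \in S :\ P :\ a :\ b :\ c by apply/card_gt0P.
move: ha hb hc hd; rewrite !inE.
move=> /andP[naP aS] /andP[nba /andP[nbP bS]] /andP[nca /andP[ncb /andP[ncP cS]]].
move=> /andP[ndc /andP[ndb /andP[nda /andP[ndP dS]]]].
exists a, b, c, d; split; first by split.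
by split; split; rewrite // eq_sym.
Qed.

Local Close Scope ring_scope.

Theorem mainTheorem18 (q : nat) (F : finFieldType) (A : 'M[F]_3)
    (B : {set {set 'rV[F]_3}}) :
  prime_power q -> odd q -> #|F| = (q ^ 2)%N ->
  irreducible_conic_matrix A ->
  baer_subplane q B ->
  (q ^ 2 <= 2 * #|external_points A :&: B| + 3)%N.
Proof.
move=> _ hoddq hF /andP[/eqP hAT hdet] [hB [Ls [hLs hcard hjoin hmeet hquad]]].
have [P1 [P2 [P3 [P4 [[m1 m2 m3 _] [hncol _ _ _]]]]]] := hquad.
have hoddF : odd #|F| by rewrite hF oddX hoddq orbT.
have h2 := two_neq0 hoddF.
have q1 : (1 <= q)%N by case: q hoddq {hF hcard} => [|n].
pose T := [set L in pg_points F | tangent A L].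
pose E := external_points A :&: B.
pose K := conic A :&: B.
pose a := #|T :&: Ls|.
pose n := fun t => #|[set P in B | incident P t]|.
have low : (#|T| + q * a <= \sum_(t in T) n t)%N.
  have -> : (#|T| + q * a = \sum_(t in T) (1 + q * (t \in Ls)))%N.
    rewrite big_split /= sum1_card -big_distrr /= sum_ind; congr (_ + q * _)%N.
  apply: leq_sum => t; rewrite inE => /andP[ht _].
  case: (boolP (t \in Ls)) => hl.
  - by rewrite /n hcard // muln1 add1n.
  - rewrite muln0 addn0 /n; apply/card_gt0P.
    have [P hP iP] := every_line hF hB hLs hcard hjoin hmeet m1 m2 m3 hncol ht.
    by exists P; rewrite inE hP iP.
have dc : (\sum_(t in T) n t = \sum_(P in B) #|TP A P|)%N.
  have e1 t : n t = (\sum_(P in B) (incident P t : nat))%N.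
    by rewrite sum_ind /n.
  have e2 P : #|TP A P| = (\sum_(t in T) (incident P t : nat))%N.
    by rewrite sum_ind; apply: eq_card => x; rewrite !inE andbA.
  under eq_bigr do rewrite e1.
  under [RHS]eq_bigr do rewrite e2.
  exact: exchange_big.
have up : (\sum_(P in B) #|TP A P| <= 2 * #|E| + #|K|)%N.
  have -> : (2 * #|E| + #|K| =
       \sum_(P in B) (2 * (P \in external_points A) + (P \in conic A)))%N.
    rewrite big_split /= -big_distrr /= !sum_ind.
    congr (2 * _ + _)%N; apply: eq_card => x; rewrite !inE andbC //.
  apply: leq_sum => P hP.
  have pP : P \in pg_points F by apply: (subsetP hB).
  case: (boolP (P \in conic A)) => hc.
  - by apply: leq_trans (tau_conic hAT hdet h2 hc) _; rewrite addn1.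
  - case: (tau_nonconic hAT hdet h2 pP hc) => e; rewrite e; first by [].
    have -> : P \in external_points A.
      by rewrite inE pP hc /=; apply/eqP; exact: e.
    by [].
have injK : {in conic A &, injective (polarL A)}.
  by move=> X Y hX hY; apply: (polar_inj hdet (conic_pts hX) (conic_pts hY)).
have hT : (#|F|.+1 <= #|T|)%N.
  apply: leq_trans (conic_big hAT hdet hoddF h2) _.
  rewrite -(card_in_imset injK); apply: subset_leq_card; apply/subsetP => L /imsetP[X hX ->].
  by rewrite inE (polar_pts hdet (conic_pts hX)) (tangent_polar hAT hdet hX).
have hK : (#|K| <= q * a + 4)%N.
  case: (leqP #|K| 4) => hK4; first by apply: leq_trans hK4 (leq_addl _ _).
  have sub : polarL A @: K \subset T :&: Ls.
    apply/subsetP => L /imsetP[X hX ->].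
    have [a' [b' [c' [d' [[ha hb hc hd] [[n1 n2 n3 n4] [n5 n6 n7] [n8 n9 n10]]]]]]] :=
      four_others hK4 hX.
    move: hX ha hb hc hd; rewrite !in_setI.
    move=> /andP[cX bX] /andP[ca ba] /andP[cb bb] /andP[cc bc] /andP[cd bd].
    rewrite inE (polar_pts hdet (conic_pts cX)) (tangent_polar hAT hdet cX) /=.
    exact: (pascal hAT hdet h2 hB hLs hjoin hmeet cX ca cb cc cd bX ba bb bc bd
                   n1 n2 n3 n4 n5 n6 n7 n8 n9 n10).
  have := subset_leq_card sub; rewrite card_in_imset; last first.
    move=> X Y; rewrite !in_setI => /andP[hX _] /andP[hY _]; exact: injK.
  move=> hKa; apply: leq_trans hKa _.
  by apply: leq_trans (leq_pmull _ q1) (leq_addr _ _).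
move: low up hT hK; rewrite dc hF /E /K /a => h1 h3 h4 h5.
lia.
Qed.
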